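(* Let $\mathcal{R}$ be a (finite or infinite) set of positive integers and let $R(z)=\sum_{r\in\mathcal{R}} z^r$. Let $K_{\mathcal{R}}(t,x,z)=\sum_S t^{\mathrm{da}(S)}x^{m(S)}z^{|S|}$, where the sum runs over all compositions $S$ (including the empty one) all of whose parts belong to $\mathcal{R}$, $m(S)$ is the number of parts and $|S|$ the sum of the parts. Then, as formal power series, $$K_{\mathcal{R}}(t,x,z)=\frac{1+xR(z)}{1-x^2R(z^2)-tx^2\left(R(z)^2-R(z^2)\right)}.$$
   Context: A composition is a finite sequence $(a_1,\dots,a_m)$, $m\ge0$, of positive integers. For a finite sequence $S=(a_1,\dots,a_m)$, the degree of asymmetry is $\mathrm{da}(S)=|\{i: 1\le i\le m/2,\ a_i\neq a_{m+1-i}\}|$. *)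

(* Defs.v *)
(* Formal power series in three variables t, x, z with
   integer coefficients, represented by their coefficient functions:
   f a m n = coefficient of t^a x^m z^n. *)
From mathcomp Require Import all_boot all_order all_algebra.
Set Implicit Arguments. Unset Strict Implicit. Unset Printing Implicit Defensive.
Import Order.TTheory GRing.Theory Num.Theory.
Local Open Scope ring_scope.

Definition fps := nat -> nat -> nat -> int.

Definition fps_add (f g : fps) : fps := fun a m n => f a m n + g a m n.
Definition fps_sub (f g : fps) : fps := fun a m n => f a m n - g a m n.
Definition fps_mul (f g : fps) : fps := fun a m n =>
  \sum_(i < a.+1) \sum_(j < m.+1) \sum_(k < n.+1)
     f i j k * g (a - i)%N (m - j)%N (n - k)%N.

Definition fps_mono (i j k : nat) : fps := fun a m n =>
  ((a == i) && (m == j) && (n == k))%:R.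
Definition fps_one : fps := fps_mono 0 0 0.
Definition fps_t : fps := fps_mono 1 0 0.
Definition fps_x : fps := fps_mono 0 1 0.

Definition Rz (R : pred nat) : fps := fun a m n =>
  ((a == 0%N) && (m == 0%N) && R n)%:R.
Definition Rz2 (R : pred nat) : fps := fun a m n =>
  ((a == 0%N) && (m == 0%N) && ~~ odd n && R n./2)%:R.

(* degree of asymmetry: |{ i : 1 <= i <= m/2, a_i <> a_{m+1-i} }|,
   written 0-indexed: i < m/2 and s_i <> s_{m-1-i} *)
Definition da (s : seq nat) : nat :=
  count (fun i => nth 0%N s i != nth 0%N s (size s - 1 - i)%N) (iota 0 (size s)./2).

(* A composition with m parts and sum n has every part <= n, so it is the
   image (map val) of a unique m-tuple over 'I_n.+1. *)
Definition K_coef (R : pred nat) (a m n : nat) : nat :=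
  #|[pred s : m.-tuple 'I_n.+1 |
      all R (map val s) && (sumn (map val s) == n) && (da (map val s) == a)]|.

Definition K (R : pred nat) : fps := fun a m n => (K_coef R a m n)%:R.

(* Main.v *)
Require Import Defs.
From mathcomp Require Import all_boot all_order all_algebra.
From mathcomp Require Import ring zify.
From Stdlib Require Import FunctionalExtensionality.
Set Implicit Arguments. Unset Strict Implicit. Unset Printing Implicit Defensive.
Import Order.TTheory GRing.Theory Num.Theory.

Section Aux.
Local Open Scope ring_scope.

Lemma sum_pick_eq (F : nat -> int) a c :
  \sum_(i < a.+1) ((i:nat) == c)%:R * F i = (c <= a)%N%:R * F c.
Proof.
case: (leqP c a) => H.
  rewrite (bigD1 (Ordinal (H : (c < a.+1)%N))) //= eqxx mul1r big1 ?addr0 ?mul1r //.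
  move=> i Hi; case: eqP => [E|_]; last by rewrite mul0r.
  by case/eqP: Hi; apply: val_inj.
rewrite big1 ?mul0r // => i _; case: eqP => [E|_]; last by rewrite mul0r.
have := ltn_ord i; lia.
Qed.

Lemma sum_pick_sub (F : nat -> int) a c :
  \sum_(i < a.+1) ((a - i)%N == c)%:R * F i = (c <= a)%N%:R * F (a - c)%N.
Proof.
case: (leqP c a) => H.
  rewrite (eq_bigr (fun i : 'I_a.+1 => ((i:nat) == (a - c)%N)%:R * F i)).
    by rewrite sum_pick_eq leq_subr.
  move=> i _; congr (_%:R * _); have := ltn_ord i => Hi.
  by apply/eqP/eqP; lia.
rewrite big1 ?mul0r // => i _; case: eqP => [E|_]; last by rewrite mul0r.
have := ltn_ord i; lia.
Qed.


Lemma mul_supp (f g : fps) a0 m0 (h : nat -> int) :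
  (forall a' m' n', g a' m' n' = ((a' == a0) && (m' == m0))%:R * h n') ->
  forall a m n, fps_mul f g a m n =
    ((a0 <= a)%N && (m0 <= m)%N)%:R *
      \sum_(k < n.+1) f (a - a0)%N (m - m0)%N k * h (n - k)%N.
Proof.
move=> Hg a m n; rewrite /fps_mul.
transitivity (\sum_(i < a.+1) ((a - i)%N == a0)%:R *
  \sum_(j < m.+1) ((m - j)%N == m0)%:R *
     \sum_(k < n.+1) f i j k * h (n - k)%N).
  apply: eq_bigr => i _; rewrite mulr_sumr; apply: eq_bigr => j _.
  rewrite mulrA mulr_sumr; apply: eq_bigr => k _.
  rewrite Hg -mulnb natrM; ring.
under eq_bigr => i _ do
  rewrite (sum_pick_sub (fun j => \sum_(k < n.+1) f i j k * h (n - k)%N)).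
rewrite (sum_pick_sub (fun i => (m0 <= m)%N%:R *
   \sum_(k < n.+1) f i (m - m0)%N k * h (n - k)%N)).
by rewrite -mulnb natrM mulrA.
Qed.

Lemma mul_supp_l (f g : fps) a0 m0 (h : nat -> int) :
  (forall a' m' n', f a' m' n' = ((a' == a0) && (m' == m0))%:R * h n') ->
  forall a m n, fps_mul f g a m n =
    ((a0 <= a)%N && (m0 <= m)%N)%:R *
      \sum_(k < n.+1) h k * g (a - a0)%N (m - m0)%N (n - k)%N.
Proof.
move=> Hf a m n; rewrite /fps_mul.
transitivity (\sum_(i < a.+1) ((i:nat) == a0)%:R *
  \sum_(j < m.+1) ((j:nat) == m0)%:R *
     \sum_(k < n.+1) h k * g (a - i)%N (m - j)%N (n - k)%N).
  apply: eq_bigr => i _; rewrite mulr_sumr; apply: eq_bigr => j _.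
  rewrite mulrA mulr_sumr; apply: eq_bigr => k _.
  rewrite Hf -mulnb natrM; ring.
under eq_bigr => i _ do
  rewrite (sum_pick_eq (fun j => \sum_(k < n.+1) h k * g (a - i)%N (m - j)%N (n - k)%N)).
rewrite (sum_pick_eq (fun i => (m0 <= m)%N%:R *
   \sum_(k < n.+1) h k * g (a - i)%N (m - m0)%N (n - k)%N)).
by rewrite -mulnb natrM mulrA.
Qed.

Lemma mono_supp i j k a m n :
  fps_mono i j k a m n = ((a == i) && (m == j))%:R * (n == k)%:R.
Proof. by rewrite /fps_mono -natrM mulnb. Qed.

Lemma mul_mono_r (f : fps) i j k a m n :
  fps_mul f (fps_mono i j k) a m n =
  ((i <= a)%N && (j <= m)%N && (k <= n)%N)%:R * f (a - i)%N (m - j)%N (n - k)%N.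
Proof.
rewrite (mul_supp f (a0 := i) (m0 := j) (h := fun n' => (n' == k)%:R)); last exact: mono_supp.
under eq_bigr => k' _ do rewrite mulrC.
by rewrite (sum_pick_sub (fun k' => f (a - i)%N (m - j)%N k')) mulrA -natrM mulnb.
Qed.

Lemma mul_mono_l (g : fps) i j k a m n :
  fps_mul (fps_mono i j k) g a m n =
  ((i <= a)%N && (j <= m)%N && (k <= n)%N)%:R * g (a - i)%N (m - j)%N (n - k)%N.
Proof.
rewrite (mul_supp_l g (a0 := i) (m0 := j) (h := fun n' => (n' == k)%:R)); last exact: mono_supp.
by rewrite (sum_pick_eq (fun k' => g (a - i)%N (m - j)%N (n - k')%N)) mulrA -natrM mulnb.
Qed.

Lemma mul_sub (f g h : fps) : fps_mul f (fps_sub g h) = fps_sub (fps_mul f g) (fps_mul f h).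
Proof.
apply: functional_extensionality => a; apply: functional_extensionality => m;
apply: functional_extensionality => n.
rewrite /fps_mul /fps_sub -sumrB; apply: eq_bigr => i _.
rewrite -sumrB; apply: eq_bigr => j _.
rewrite -sumrB; apply: eq_bigr => k _.
by rewrite mulrBr.
Qed.


Definition R2ind (R : pred nat) n : int := (~~ odd n && R n./2)%:R.
Definition c2 (R : pred nat) n : int := \sum_(k < n.+1) (R k)%:R * (R (n - k)%N)%:R.

Lemma fext (f g : fps) : (forall a m n, f a m n = g a m n) -> f = g.
Proof.
move=> H; apply: functional_extensionality => a; apply: functional_extensionality => m;
apply: functional_extensionality => n; exact: H.
Qed.

Lemma xx : fps_mul fps_x fps_x = fps_mono 0 2 0.
Proof.
apply: fext => a m n; rewrite /fps_x mul_mono_r /fps_mono !subn0.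
by case: m => [|[|[|m]]] /=; rewrite ?mul0r ?mul1r ?andbF.
Qed.

Lemma txx : fps_mul fps_t (fps_mono 0 2 0) = fps_mono 1 2 0.
Proof.
apply: fext => a m n; rewrite /fps_t mul_mono_r /fps_mono !subn0.
by case: m => [|[|[|m]]] /=; rewrite ?mul0r ?mul1r ?andbF.
Qed.

Lemma Aform R a m n :
  fps_mul (fps_mono 0 2 0) (Rz2 R) a m n = ((a == 0%N) && (m == 2%N))%:R * R2ind R n.
Proof.
rewrite mul_mono_l /Rz2 /R2ind !subn0 -natrM mulnb.
case: m => [|[|[|m]]] /=; rewrite ?andbF ?mul0r //= subnn.
by case: (a == 0%N); case: (odd n); case: (R n./2).
Qed.

Lemma RRform R a m n :
  fps_mul (Rz R) (Rz R) a m n = ((a == 0%N) && (m == 0%N))%:R * c2 R n.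
Proof.
rewrite (mul_supp (Rz R) (a0 := 0%N) (m0 := 0%N) (h := fun n' => (R n')%:R)); last first.
  by move=> a' m' n'; rewrite /Rz -natrM mulnb.
rewrite !subn0 /= mul1r /c2 mulr_sumr; apply: eq_bigr => k _.
by rewrite /Rz -natrM mulnb mulrA -natrM mulnb -natrM mulnb.
Qed.

Lemma Bform R a m n :
  fps_mul (fps_mono 1 2 0) (fps_sub (fps_mul (Rz R) (Rz R)) (Rz2 R)) a m n
  = ((a == 1%N) && (m == 2%N))%:R * (c2 R n - R2ind R n).
Proof.
rewrite mul_mono_l /fps_sub RRform /Rz2 /R2ind !subn0.
case: m => [|[|[|m]]] /=; rewrite ?andbF ?andFb ?mul0r ?subrr ?mulr0 //.
case: a => [|[|a]] /=; rewrite ?andbF ?andFb ?mul0r ?mul1r ?subrr ?mulr0 //.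

Qed.


Lemma conv (F h : nat -> int) (H : nat -> nat -> int) n :
  (forall j, (j <= n)%N ->
     h j = \sum_(x < n.+1) \sum_(y < n.+1) ((x + y)%N == j)%:R * H x y) ->
  \sum_(k < n.+1) F k * h (n - k)%N =
  \sum_(x < n.+1) \sum_(y < n.+1) (x + y <= n)%N%:R * H x y * F (n - (x + y))%N.
Proof.
move=> Hh.
transitivity (\sum_(k < n.+1) \sum_(x < n.+1) \sum_(y < n.+1)
   ((n - k)%N == (x + y)%N)%:R * (F k * H x y)).
  apply: eq_bigr => k _; rewrite Hh ?leq_subr // mulr_sumr; apply: eq_bigr => x _.
  rewrite mulr_sumr; apply: eq_bigr => y _; rewrite eq_sym; ring.
rewrite exchange_big /=; apply: eq_bigr => x _; rewrite exchange_big /=.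
apply: eq_bigr => y _.
rewrite (sum_pick_sub (fun k => F k * H x y)); ring.
Qed.

Lemma eq_double_half x j : ((x + x)%N == j) = ~~ odd j && (x == j./2).
Proof.
rewrite addnn; case Ho: (odd j) => /=.
  by apply/negbTE; apply: contraTneq Ho => <-; rewrite odd_double.
by rewrite -{1}(odd_double_half j) Ho add0n (inj_eq double_inj).
Qed.

Lemma R2ind_sum R n j : (j <= n)%N ->
  R2ind R j = \sum_(x < n.+1) \sum_(y < n.+1)
     ((x + y)%N == j)%:R * (R x && R y && (x == y :> nat))%:R.
Proof.
move=> Hj.
transitivity (\sum_(x < n.+1) ((x:nat) == j./2)%:R * (~~ odd j && R j./2)%:R : int).
  rewrite (sum_pick_eq (fun _ => (~~ odd j && R j./2)%:R)).
  have -> : (j./2 <= n)%N.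
    apply: leq_trans Hj; rewrite leq_half_double -addnn; lia.
  by rewrite mul1r.
apply: eq_bigr => x _.
transitivity (\sum_(y < n.+1) ((y:nat) == x)%:R * (((x + x)%N == j) && R x)%:R : int).
  rewrite (sum_pick_eq (fun _ => (((x + x)%N == j) && R x)%:R)).
  have Hx : (x <= n)%N := ltn_ord x.
  rewrite Hx mul1r eq_double_half.
  case: eqP => [->|]; first by rewrite -natrM mulnb andbT.
  by rewrite mul0r andbF.
apply: eq_bigr => y _; case: eqP => [->|Hne]; rewrite ?eqxx.
  by rewrite -!natrM !mulnb !andbT andbb.
by rewrite (introF eqP (nesym Hne)) !andbF !mul0r mulr0.
Qed.

Lemma c2_sum R n j : (j <= n)%N ->
  c2 R j = \sum_(x < n.+1) \sum_(y < n.+1)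
     ((x + y)%N == j)%:R * (R x && R y)%:R.
Proof.
move=> Hj.
transitivity (\sum_(x < n.+1) ((x <= j)%N && R x && R (j - x)%N)%:R : int).
  rewrite /c2 (big_ord_widen n.+1 (fun k => (R k)%:R * (R (j - k)%N)%:R : int)) //.
  rewrite big_mkcond /=; apply: eq_bigr => x _.
  rewrite ltnS; case: (x <= j)%N; rewrite //= -natrM mulnb //.
apply: eq_bigr => x _.
transitivity (\sum_(y < n.+1) ((y:nat) == (j - x)%N)%:R * ((x <= j)%N && R x && R (j - x)%N)%:R : int).
  rewrite (sum_pick_eq (fun _ => ((x <= j)%N && R x && R (j - x)%N)%:R)).
  have -> : (j - x <= n)%N by apply: leq_trans Hj; apply: leq_subr.
  by rewrite mul1r.
apply: eq_bigr => y _.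
case: (leqP x j) => Hxj /=.
  have -> : ((x + y)%N == j) = ((y:nat) == (j - x)%N) by apply/eqP/eqP; lia.
  case: eqP => [->|]; last by rewrite !mul0r.
  by rewrite -!natrM !mulnb.
have -> : ((x + y)%N == j) = false by apply/eqP; lia.
by rewrite mul0r mulr0.
Qed.

Lemma c2R2_sum R n j : (j <= n)%N ->
  c2 R j - R2ind R j = \sum_(x < n.+1) \sum_(y < n.+1)
     ((x + y)%N == j)%:R * (R x && R y && (x != y :> nat))%:R.
Proof.
move=> Hj; rewrite (c2_sum R Hj) (R2ind_sum R Hj) -sumrB; apply: eq_bigr => x _.
rewrite -sumrB; apply: eq_bigr => y _; rewrite -mulrBr; congr (_ * _).
by case: (R x); case: (R y); case: eqP.
Qed.


Definition Pn (R : pred nat) a k (s : seq nat) :=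
  all R s && (sumn s == k) && (da s == a).
Definition KN (R : pred nat) a m k N :=
  #|[pred t : m.-tuple 'I_N.+1 | Pn R a k (map val t)]|.

Lemma K_KN R a m k : K_coef R a m k = KN R a m k k.
Proof. by []. Qed.

Lemma sumn_le (s : seq nat) x : x \in s -> (x <= sumn s)%N.
Proof.
elim: s => [|y s IH] //=; rewrite in_cons => /orP [/eqP ->|/IH]; first exact: leq_addr.
move=> H; apply: leq_trans H _; exact: leq_addl.
Qed.

Lemma tuple_val_inj m N (t1 t2 : m.-tuple 'I_N) : map val t1 = map val t2 -> t1 = t2.
Proof. by move=> E; apply: val_inj; exact: (inj_map val_inj E). Qed.

Lemma widen R a m k N : (k <= N)%N -> KN R a m k k = KN R a m k N.
Proof.
move=> Hk; rewrite /KN.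
pose f := fun t : m.-tuple 'I_k.+1 => map_tuple (widen_ord (Hk : (k < N.+1)%N)) t.
have Ef : forall t, map val (f t) = map val t.
  by move=> t; rewrite /f /= -map_comp; apply: eq_map.
have finj : injective f by move=> t1 t2 E; apply: tuple_val_inj; rewrite -!Ef E.
rewrite -(card_imset _ finj); apply: eq_card => t; rewrite inE /=.
apply/imsetP/idP.
  by case=> t' Ht' ->; rewrite Ef; move: Ht'; rewrite inE.
move=> Ht.
have Hle : forall i, i \in map val t -> (i < k.+1)%N.
  move=> i Hi; rewrite ltnS; move: Ht; rewrite /Pn => /andP [/andP [_ /eqP <-] _].
  exact: sumn_le.
pose t' := map_tuple (fun i : 'I_N.+1 => (inord i : 'I_k.+1)) t.
have Et' : map val t' = map val t.
  rewrite /t' /= -map_comp; apply/eq_in_map => i Hi /=.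
  by rewrite inordK // Hle // map_f.
exists t'; first by rewrite inE Et'.
by apply: tuple_val_inj; rewrite Ef Et'.
Qed.


Lemma sum_tuple0 (T : finType) (F : seq T -> int) :
  \sum_(u : 0.-tuple T) F u = F [::].
Proof.
rewrite (eq_bigr (fun _ => F [::])); last by move=> u _; rewrite tuple0.
by rewrite sumr_const card_tuple expn0.
Qed.

Lemma sum_tuple_cons (T : finType) m (F : seq T -> int) :
  \sum_(t : m.+1.-tuple T) F t = \sum_(x : T) \sum_(u : m.-tuple T) F (x :: u).
Proof.
rewrite pair_big /=.
pose h := fun p : T * m.-tuple T => [tuple of p.1 :: p.2].
pose g := fun t : m.+1.-tuple T => (thead t, [tuple of behead t]).
have hg : cancel h g by case=> x u; rewrite /g /h /=; congr pair; apply: val_inj.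
have gh : cancel g h by move=> t; rewrite /g /h /=; rewrite [RHS]tuple_eta.
rewrite (reindex h) /=; last by exists g => ? _.
by [].
Qed.

Lemma sum_tuple_rev (T : finType) m (F : seq T -> int) :
  \sum_(t : m.-tuple T) F t = \sum_(t : m.-tuple T) F (rev t).
Proof.
have rinj : injective (@rev_tuple m T).
  by move=> t1 t2 E; apply: val_inj; rewrite -[val t1]revK -[val t2]revK;
     move: (congr1 val E) => /= ->.
by rewrite (reindex_inj rinj).
Qed.

Lemma sum_tuple_ends (T : finType) m (F : seq T -> int) :
  \sum_(t : m.+2.-tuple T) F t =
  \sum_(x : T) \sum_(y : T) \sum_(v : m.-tuple T) F (x :: rcons v y).
Proof.
rewrite sum_tuple_cons; apply: eq_bigr => x _.
rewrite (sum_tuple_rev _ (fun u => F (x :: u))) (sum_tuple_cons _ (fun u => F (x :: rev u))); apply: eq_bigr => y _.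
rewrite (sum_tuple_rev _ (fun v => F (x :: rev (y :: v)))).
by apply: eq_bigr => v _; rewrite rev_cons revK.
Qed.


Lemma half_le n : (n./2 <= n)%N.
Proof. rewrite leq_half_double -addnn; lia. Qed.

Lemma da_ends (x y : nat) s : da (x :: rcons s y) = ((x != y) + da s)%N.
Proof.
rewrite /da /= size_rcons /=.
rewrite nth_rcons ltnn eqxx.
congr addn.
rewrite -[1%N]/(1 + 0)%N iotaDl count_map.
apply: eq_in_count => j; rewrite mem_iota add0n => /andP [_ Hj] /=.
have Hjs : (j < size s)%N by apply: leq_trans Hj (half_le _).
rewrite nth_rcons Hjs.
have -> : ((size s).+2 - 1 - (1 + j) = (size s - 1 - j).+1)%N by lia.
rewrite /= nth_rcons.
have -> : (size s - 1 - j < size s)%N by lia.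
by [].
Qed.


Lemma Pn_ends R a k (x y : nat) s :
  Pn R a k (x :: rcons s y) =
  [&& R x, R y, (x + y <= k)%N, ((x != y) <= a)%N & Pn R (a - (x != y))%N (k - (x + y))%N s].
Proof.
rewrite /Pn /= all_rcons sumn_rcons da_ends.
have -> : ((x + (sumn s + y))%N == k) = ((x + y <= k)%N && (sumn s == (k - (x + y))%N)).
  by case: (leqP (x + y) k) => H /=; [apply/eqP/eqP|apply/eqP]; lia.
have : (((x != y) + da s)%N == a) = (((x != y) <= a)%N && (da s == (a - (x != y))%N)).
  by case: (leqP (x != y) a) => H /=; [apply/eqP/eqP|apply/eqP]; lia.
move=> ->.
case: (R x); case: (R y); case: (all R s); rewrite /= ?andbF //.
by case: (x + y <= k)%N; case: ((x != y) <= a)%N; case: (sumn s == _); case: (da s == _).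
Qed.

Lemma KN_sum R a m k N :
  (KN R a m k N)%:R = \sum_(t : m.-tuple 'I_N.+1) (Pn R a k (map val t))%:R :> int.
Proof.
rewrite /KN -sum1_card natr_sum big_mkcond /=; apply: eq_bigr => t _.
by rewrite inE; case: (Pn _ _ _ _).
Qed.

Lemma KN_rec R a m k N :
  (KN R a m.+2 k N)%:R = \sum_(x < N.+1) \sum_(y < N.+1)
    ([&& R x, R y, (x + y <= k)%N & ((x != y :> nat) <= a)%N])%:R *
    (KN R (a - (x != y :> nat))%N m (k - (x + y))%N N)%:R :> int.
Proof.
rewrite KN_sum (sum_tuple_ends _ (fun s => (Pn R a k (map val s))%:R)).
apply: eq_bigr => x _; apply: eq_bigr => y _.
rewrite KN_sum mulr_sumr; apply: eq_bigr => v _.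
rewrite /= map_rcons Pn_ends -natrM mulnb.
by rewrite !andbA.
Qed.


Lemma KN0 R a n : (K_coef R a 0 n)%:R = ((a == 0%N) && (n == 0%N))%:R :> int.
Proof.
rewrite K_KN KN_sum (sum_tuple0 (fun s : seq 'I_n.+1 => (Pn R a n (map val s))%:R)) /Pn /=.
by rewrite andbC ![_ == 0%N]eq_sym.
Qed.

Lemma KN1 R a n : (K_coef R a 1 n)%:R = ((a == 0%N) && R n)%:R :> int.
Proof.
rewrite K_KN KN_sum (sum_tuple_cons _ (fun s : seq 'I_n.+1 => (Pn R a n (map val s))%:R)).
under eq_bigr => x _ do
  rewrite (sum_tuple0 (fun s : seq 'I_n.+1 => (Pn R a n (map val (x :: s)))%:R)).
transitivity (\sum_(x < n.+1) ((x:nat) == n)%:R * ((a == 0%N) && R n)%:R : int).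
  apply: eq_bigr => x _; rewrite /Pn /= addn0 andbT.
  case: eqP => [->|_]; last by rewrite andbF andFb mul0r.
  by rewrite /da /= mul1r andbT eq_sym andbC.
by rewrite (sum_pick_eq (fun _ => ((a == 0%N) && R n)%:R)) leqnn mul1r.
Qed.

Lemma K_main R a m n :
  (K_coef R a m.+2 n)%:R =
  \sum_(k < n.+1) (K_coef R a m k)%:R * R2ind R (n - k)%N +
  (0 < a)%N%:R * \sum_(k < n.+1) (K_coef R (a - 1)%N m k)%:R * (c2 R (n - k)%N - R2ind R (n - k)%N) :> int.
Proof.
rewrite (@conv (fun k => (K_coef R a m k)%:R) (R2ind R)
   (fun x y => (R x && R y && (x == y :> nat))%:R) n); last exact: R2ind_sum.
rewrite (@conv (fun k => (K_coef R (a - 1)%N m k)%:R)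
   (fun j => c2 R j - R2ind R j)
   (fun x y => (R x && R y && (x != y :> nat))%:R) n); last exact: c2R2_sum.
rewrite K_KN KN_rec mulr_sumr -big_split /=; apply: eq_bigr => x _.
rewrite mulr_sumr -big_split /=; apply: eq_bigr => y _.
rewrite -widen ?leq_subr // -!K_KN.
case: (R x); case: (R y); case: (x + y <= n)%N; case: eqP => _; case: a => [|a];
  rewrite /= ?subn0 ?mul0r ?mul1r ?addr0 ?add0r ?mulr0 ?subn1 //=.
Qed.

End Aux.

Theorem proposition2p2 (R : pred nat) (hR : forall r, R r -> (0 < r)%N) :
  fps_mul (K R)
    (fps_sub (fps_sub fps_one (fps_mul (fps_mul fps_x fps_x) (Rz2 R)))
       (fps_mul (fps_mul fps_t (fps_mul fps_x fps_x))
          (fps_sub (fps_mul (Rz R) (Rz R)) (Rz2 R))))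
  = fps_add fps_one (fps_mul fps_x (Rz R)).
Proof.
rewrite xx txx (mul_sub (K R)) (mul_sub (K R)); apply: fext => a m n.
rewrite /fps_sub /fps_add.
rewrite (mul_supp (K R) (a0 := 0%N) (m0 := 2%N) (h := R2ind R) (Aform R)).
rewrite (mul_supp (K R) (a0 := 1%N) (m0 := 2%N) (h := fun j => (c2 R j - R2ind R j)%R) (Bform R)).
rewrite /fps_one mul_mono_r /fps_x mul_mono_l !subn0 /K.
rewrite !leq0n !andTb ?andbT.
have F0 : ((false%:R)%R : int) = 0%R by [].
case: m => [|[|m]]; rewrite /= ?mul1r ?mul0r ?subr0 ?addr0 ?andbF ?andbT.
- by rewrite F0 mul0r subr0 KN0 /fps_mono /= eqxx andbT.
- rewrite F0 mul0r subr0 KN1 /fps_mono /Rz /= subnn /=.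
  have -> : (1%N == 0%N) = false by [].
  by rewrite eqxx andbT andbF F0 add0r.
- have -> : (m.+2 - 2 = m)%N by lia.
  have -> : (m.+2 - 1 = m.+1)%N by lia.
  rewrite K_main /fps_mono /Rz /=.
  have -> : (m.+2 == 0%N) = false by [].
  have -> : (m.+1 == 0%N) = false by [].
  rewrite !andbF F0 addr0; ring.
Qed.
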